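(* Let $i=\sqrt{-1}$ and let $\zeta_8$ be a primitive $8$-th root of unity. (1) $\{\operatorname{Tr}(M) : M\in G_q(i)\}=\{0,\pm1,\pm2,\pm i,\pm 2i,\pm1\pm i\ (\text{arbitrary signs})\}=\{0,\ c,\ \sqrt{2}\,\zeta_8\,c,\ 2c : c=i^j,\ j=0,1,2,3\}$. (2) For $M_q\in G_q$, let $f(q)=\operatorname{Tr} M_q$. If $f(1)$ is a multiple of $4$, then $f(i)=0$.
   Context: Let $q$ be a formal parameter and let $R_q=\begin{pmatrix} q & 1\\ 0 & 1\end{pmatrix}$, $S_q=\begin{pmatrix} 0 & -q^{-1}\\ 1 & 0\end{pmatrix}\in \mathrm{GL}(2,\mathbb{Z}[q,q^{-1}])$. Let $G_q=\langle R_q,S_q\rangle$ be the group they generate. For $\zeta\in\mathbb{C}^*$, set $G_q(\zeta)=\{M_q|_{q=\zeta} : M_q\in G_q\}\subset \mathrm{GL}(2,\mathbb{C})$. *)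

(* Defs.v *)
From HB Require Import structures.
From mathcomp Require Import all_boot all_order all_algebra.
From mathcomp Require Import algC.
Set Implicit Arguments. Unset Strict Implicit. Unset Printing Implicit Defensive.
Import Order.TTheory GRing.Theory Num.Theory.
Local Open Scope ring_scope.

(* Elements of G_q = <R_q, S_q> are represented by words in the generators
   and their inverses; M_q|_{q=z} is the corresponding product of the
   specialized generator matrices (specialization q |-> z is a ring
   homomorphism Z[q,q^-1] -> C, so it commutes with products/inverses). *)
Inductive gen := GR | GS | GRinv | GSinv.

Definition Rmx {K : comUnitRingType} (z : K) : 'M[K]_2 :=
  \matrix_(i < 2, j < 2)
    if (i == 0 :> nat) then (if (j == 0 :> nat) then z else 1)
    else (if (j == 0 :> nat) then 0 else 1).

Definition Smx {K : comUnitRingType} (z : K) : 'M[K]_2 :=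
  \matrix_(i < 2, j < 2)
    if (i == 0 :> nat) then (if (j == 0 :> nat) then 0 else - z^-1)
    else (if (j == 0 :> nat) then 1 else 0).

Definition gen_mx {K : comUnitRingType} (z : K) (g : gen) : 'M[K]_2 :=
  match g with
  | GR => Rmx z
  | GS => Smx z
  | GRinv => invmx (Rmx z)
  | GSinv => invmx (Smx z)
  end.

Definition eval_word {K : comUnitRingType} (z : K) (w : seq gen) : 'M[K]_2 :=
  foldr (fun g M => gen_mx z g *m M) 1%:M w.

Definition trace_set_i : seq algC :=
  [:: 0; 1; -1; 2; -2; ('i : algC); - 'i; 2 * 'i; - (2 * 'i);
      1 + 'i; 1 - 'i; -1 + 'i; -1 - 'i].

(* Main.v *)
Require Import Defs.
From HB Require Import structures.
From mathcomp Require Import all_boot all_order all_algebra.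
From mathcomp Require Import algC.
From mathcomp Require Import ring.
Import Order.TTheory GRing.Theory Num.Theory.
Local Open Scope ring_scope.

Definition cm (R : Type) := (R * R * R * R)%type.
Definition cmul {R : nzRingType} (A B : cm R) : cm R :=
  let '(a, b, c, d) := A in let '(e, f, g, h) := B in
  (a * e + b * g, a * f + b * h, c * e + d * g, c * f + d * h).
Definition cmap {R : nzRingType} (A : cm int) : cm R :=
  let '(a, b, c, d) := A in (a%:~R, b%:~R, c%:~R, d%:~R).

Lemma cmap_mul (R : nzRingType) (A B : cm int) :
  cmap (cmul A B) = cmul (cmap A) (cmap B) :> cm R.
Proof.
case: A => [[[a b] c] d]; case: B => [[[e f] g] h] /=.
by rewrite !intrD !intrM.
Qed.

Definition gz := (int * int)%type.
Definition gadd (x y : gz) : gz := (x.1 + y.1, x.2 + y.2).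
Definition gmul (x y : gz) : gz := (x.1 * y.1 - x.2 * y.2, x.1 * y.2 + x.2 * y.1).
Definition gemb (x : gz) : algC := x.1%:~R + x.2%:~R * 'i.

Lemma ii : 'i * 'i = -1 :> algC.
Proof. by rewrite -expr2 sqrCi. Qed.

Lemma gemb_add x y : gemb (gadd x y) = gemb x + gemb y.
Proof. rewrite /gemb /= !intrD; ring. Qed.
Lemma gemb_mul x y : gemb (gmul x y) = gemb x * gemb y.
Proof. rewrite /gemb /= !intrD !intrM !intrN; ring: ii. Qed.

Definition cmulG (A B : cm gz) : cm gz :=
  let '(a, b, c, d) := A in let '(e, f, g, h) := B in
  (gadd (gmul a e) (gmul b g), gadd (gmul a f) (gmul b h),
   gadd (gmul c e) (gmul d g), gadd (gmul c f) (gmul d h)).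
Definition cmapG (A : cm gz) : cm algC :=
  let '(a, b, c, d) := A in (gemb a, gemb b, gemb c, gemb d).
Lemma cmapG_mul A B : cmapG (cmulG A B) = cmul (cmapG A) (cmapG B).
Proof.
case: A => [[[a b] c] d]; case: B => [[[e f] g] h] /=.
by rewrite !gemb_add !gemb_mul.
Qed.

Definition tomx (A : cm algC) : 'M[algC]_2 :=
  let '(a, b, c, d) := A in
  \matrix_(i < 2, j < 2)
    if (i == 0 :> nat) then (if (j == 0 :> nat) then a else b)
    else (if (j == 0 :> nat) then c else d).
Arguments tomx : simpl never.

Lemma tomx_mul A B : tomx A *m tomx B = tomx (cmul A B).
Proof.
case: A => [[[a b] c] d]; case: B => [[[e f] g] h]; rewrite /tomx /=.
apply/matrixP => i j; rewrite !mxE !big_ord_recl big_ord0 !mxE /=.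
case: i => [[|[|i]] Hi] //; case: j => [[|[|j]] Hj] //=. all: try ring.
Qed.

Lemma tomx1 : 1%:M = tomx (1, 0, 0, 1).
Proof.
rewrite /tomx; apply/matrixP => i j; rewrite !mxE.
by case: i => [[|[|i]] Hi] //; case: j => [[|[|j]] Hj].
Qed.

Lemma tr_tomx a b c d : \tr (tomx (a, b, c, d)) = a + d.
Proof. by rewrite /tomx /mxtrace !big_ord_recl big_ord0 !mxE /= addr0. Qed.

Lemma inv_tomx A B : tomx A *m tomx B = 1%:M -> invmx (tomx A) = tomx B.
Proof.
move=> h; have [uA _] := mulmx1_unit h.
by rewrite -[tomx B]mul1mx -(mulVmx uA) -mulmxA h mulmx1.
Qed.

Lemma Rmx_tomx (z : algC) : Rmx z = tomx (z, 1, 0, 1).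
Proof.
rewrite /tomx; apply/matrixP => i j; rewrite !mxE.
by case: i => [[|[|i]] Hi] //; case: j => [[|[|j]] Hj].
Qed.
Lemma Smx_tomx (z : algC) : Smx z = tomx (0, - z^-1, 1, 0).
Proof.
rewrite /tomx; apply/matrixP => i j; rewrite !mxE.
by case: i => [[|[|i]] Hi] //; case: j => [[|[|j]] Hj].
Qed.

Definition gen1 (g : gen) : cm int :=
  match g with
  | GR => (1, 1, 0, 1) | GS => (0, -1, 1, 0)
  | GRinv => (1, -1, 0, 1) | GSinv => (0, 1, -1, 0) end.
Definition genG (g : gen) : cm gz :=
  match g with
  | GR => ((0,1), (1,0), (0,0), (1,0))
  | GS => ((0,0), (0,1), (1,0), (0,0))
  | GRinv => ((0,-1), (0,1), (0,0), (1,0))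
  | GSinv => ((0,0), (1,0), (0,-1), (0,0)) end.

Lemma gemb_c (a b : int) : gemb (a, b) = a%:~R + b%:~R * 'i.
Proof. by []. Qed.

Lemma gen_mx1 g : gen_mx (1 : algC) g = tomx (cmap (gen1 g)).
Proof.
case: g => /=.
- by rewrite Rmx_tomx.
- by rewrite Smx_tomx invr1.
- rewrite Rmx_tomx. apply: inv_tomx; rewrite tomx_mul tomx1 /=; congr tomx.
  congr (_, _, _, _); ring.
- rewrite Smx_tomx; apply: inv_tomx; rewrite tomx_mul tomx1 /= invr1; congr tomx.
  congr (_, _, _, _); ring.
Qed.

Lemma gen_mxi g : gen_mx ('i : algC) g = tomx (cmapG (genG g)).
Proof.
have h0 : gemb (0, 0) = 0 by rewrite gemb_c; ring.
have h1 : gemb (1, 0) = 1 by rewrite gemb_c; ring.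
have hi : gemb (0, 1) = 'i by rewrite gemb_c; ring.
have hmi : gemb (0, -1) = - 'i by rewrite gemb_c; ring.
case: g => /=; rewrite h0 h1 ?hi ?hmi.
- by rewrite Rmx_tomx.
- by rewrite Smx_tomx invCi opprK.
- rewrite Rmx_tomx. apply: inv_tomx; rewrite tomx_mul tomx1 /=; congr tomx.
  congr (_, _, _, _); ring: ii.
- rewrite Smx_tomx invCi opprK; apply: inv_tomx; rewrite tomx_mul tomx1 /=; congr tomx.
  congr (_, _, _, _); ring: ii.
Qed.

Definition c1 (w : seq gen) : cm int := foldr (fun g M => cmul (gen1 g) M) (1, 0, 0, 1) w.
Definition cG (w : seq gen) : cm gz :=
  foldr (fun g M => cmulG (genG g) M) ((1,0), (0,0), (0,0), (1,0)) w.

Lemma eval1 w : eval_word (1 : algC) w = tomx (cmap (c1 w)).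
Proof.
elim: w => [|g w IH] /=; first by rewrite tomx1.
by rewrite IH gen_mx1 tomx_mul cmap_mul.
Qed.

Lemma evali w : eval_word ('i : algC) w = tomx (cmapG (cG w)).
Proof.
elim: w => [|g w IH] /=.
  rewrite tomx1 /= !gemb_c; congr tomx; congr (_, _, _, _); ring.
by rewrite IH gen_mxi tomx_mul cmapG_mul.
Qed.

Definition trG (A : cm gz) : gz := let '(a, b, c, d) := A in gadd a d.
Definition tr4 (A : cm 'Z_4) : 'Z_4 := let '(a, b, c, d) := A in a + d.

Lemma tr_evali w : \tr (eval_word ('i : algC) w) = gemb (trG (cG w)).
Proof. by rewrite evali; case: (cG w) => [[[a b] c] d]; rewrite /= tr_tomx gemb_add. Qed.

Definition ST := (cm 'Z_4 * cm gz)%type.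
Definition act (g : gen) (p : ST) : ST := (cmul (cmap (gen1 g)) p.1, cmulG (genG g) p.2).
Definition gens := [:: GR; GS; GRinv; GSinv].
Definition stepP (P : seq ST) : seq ST := undup (P ++ [seq act g p | p <- P, g <- gens]).
Definition e0 : ST := ((1, 0, 0, 1), ((1,0), (0,0), (0,0), (1,0))).
Definition Pset : seq ST := iter 9 stepP [:: e0].
Opaque Pset.

Lemma Psize : size Pset = 192%N.
Proof. by vm_compute. Qed.

Lemma P_closed : all (fun p => all (fun g => act g p \in Pset) gens) Pset.
Proof. by vm_compute. Qed.
Lemma e0_in : e0 \in Pset.
Proof. by vm_compute. Qed.

Lemma all_gens (P : gen -> bool) : all P gens -> forall g, P g.
Proof. rewrite /= andbT => /and4P [? ? ? ?]; by case. Qed.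

Lemma act_pair g a b : act g (a, b) = (cmul (cmap (gen1 g)) a, cmulG (genG g) b).
Proof. by []. Qed.

Lemma inv_P w : ((cmap (c1 w) : cm 'Z_4), cG w) \in Pset.
Proof.
elim: w => [|g w IH]; first exact: e0_in.
have h := allP P_closed _ IH.
have := all_gens _ h g.
rewrite act_pair -cmap_mul.
exact.
Qed.

Definition TS : seq gz := [:: (0,0); (1,0); (-1,0); (2,0); (-2,0); (0,1); (0,-1);
  (0,2); (0,-2); (1,1); (1,-1); (-1,1); (-1,-1)].

Lemma TS_eq : trace_set_i = map gemb TS.
Proof.
rewrite /trace_set_i /= !gemb_c.
do 13 (congr (_ :: _); first by ring).
Qed.

Lemma P_tr : all (fun p => trG p.2 \in TS) Pset.
Proof. by vm_compute. Qed.

Lemma P_4 : all (fun p => (tr4 p.1 == 0) ==> (trG p.2 == (0,0))) Pset.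
Proof. by vm_compute. Qed.

Definition WS : seq (seq gen) := [:: [::]; [:: GR]; [:: GS]; [:: GRinv]; [:: GS; GR];
  [:: GSinv; GR]; [:: GS; GS]; [:: GRinv; GS]; [:: GSinv; GSinv]; [:: GS; GS; GR];
  [:: GSinv; GSinv; GRinv]; [:: GS; GR; GS; GR]; [:: GS; GS; GS; GS]].

Lemma TS_words : all (fun s => has (fun w => trG (cG w) == s) WS) TS.
Proof. by vm_compute. Qed.

Lemma has_ex {T : Type} {a : pred T} {s : seq T} : has a s -> exists x, a x.
Proof. elim: s => [|x s IH] //= /orP [h|h]; [by exists x | exact: IH]. Qed.

Lemma part1 t : (exists w : seq gen, \tr (eval_word ('i : algC) w) = t) <-> t \in trace_set_i.
Proof.
rewrite TS_eq; split.
  move=> [w <-]; rewrite tr_evali; apply: map_f.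
  exact: (allP P_tr _ (inv_P w)).
move/mapP=> [s hs ->].
have [w /eqP hw] := has_ex (allP TS_words s hs).
by exists w; rewrite tr_evali hw.
Qed.

Lemma part2 w : (exists k : int, \tr (eval_word (1 : algC) w) = (4 * k)%:~R) ->
     \tr (eval_word ('i : algC) w) = 0.
Proof.
move=> [k hk].
have := allP P_4 _ (inv_P w) => /=.
rewrite eval1 in hk.
move: hk; case: (c1 w) => [[[a b] c] d] /=.
rewrite tr_tomx -intrD => /intr_inj had.
rewrite -!intrD had intrM.
have -> : ((4 : int)%:~R : 'Z_4) = 0 by apply/eqP; vm_compute.
rewrite mul0r eqxx /= => /eqP h.
by rewrite tr_evali h gemb_c mul0r addr0.
Qed.

Definition U4 : seq gz := [:: (1,1); (1,-1); (-1,1); (-1,-1)].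

Lemma u_cases (z8 : algC) : 8.-primitive_root z8 ->
  exists2 v, v \in U4 & sqrtC 2 * z8 = gemb v.
Proof.
move=> hz.
have h8 := prim_expr_order hz.
have h4 : z8 ^+ 4 = -1.
  have hn : z8 ^+ 4 != 1 by rewrite -(prim_order_dvd hz).
  have : (z8 ^+ 4 - 1) * (z8 ^+ 4 + 1) = 0.
    have -> : (z8 ^+ 4 - 1) * (z8 ^+ 4 + 1) = z8 ^+ 8 - 1 by ring.
    by rewrite h8 subrr.
  move/eqP; rewrite mulf_eq0 subr_eq0 (negbTE hn) /= addr_eq0 => /eqP //.
set u := sqrtC 2 * z8.
have hu : u ^+ 4 = -4.
  rewrite /u exprMn h4.
  have -> : sqrtC 2 ^+ 4 = (sqrtC (2 : algC) ^+ 2) ^+ 2 by rewrite -exprM.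
  rewrite sqrtCK; ring.
have : (u - gemb (1,1)) * (u - gemb (1,-1)) * (u - gemb (-1,1)) * (u - gemb (-1,-1)) = 0.
  rewrite !gemb_c.
  have -> : (u - (1%:~R + 1%:~R * 'i)) * (u - (1%:~R + (-1)%:~R * 'i)) *
    (u - ((-1)%:~R + 1%:~R * 'i)) * (u - ((-1)%:~R + (-1)%:~R * 'i)) = u ^+ 4 + 4.
    ring: ii.
  by rewrite hu addNr.
move/eqP; rewrite !mulf_eq0 !subr_eq0 -!orbA => /or4P [] /eqP ->;
  by eexists; [|reflexivity].
Qed.

Definition ipow (j : nat) : gz := iter j (gmul (0,1)) (1,0).

Lemma gemb_ipow j : 'i ^+ j = gemb (ipow j).
Proof.
elim: j => [|j IH]; first by rewrite expr0 /ipow /= gemb_c; ring.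
by rewrite exprS IH /ipow /= gemb_mul gemb_c; congr (_ * _); ring.
Qed.

Lemma chk1 : all (fun v => all (fun s => has (fun j => [|| s == (0,0), s == ipow j,
  s == gmul v (ipow j) | s == gmul (2,0) (ipow j)]) (iota 0 4)) TS) U4.
Proof. by vm_compute. Qed.

Lemma chk2 : all (fun v => all (fun j => [&& (0,0) \in TS, ipow j \in TS,
  gmul v (ipow j) \in TS & gmul (2,0) (ipow j) \in TS]) (iota 0 4)) U4.
Proof. by vm_compute. Qed.

Theorem corollary3p5 (z8 : algC) (hz8 : 8.-primitive_root z8) :
  (* (1), first description *)
  (forall t : algC,
     (exists w : seq gen, \tr (eval_word ('i : algC) w) = t) <-> t \in trace_set_i) /\
  (* (1), second description *)
  (forall t : algC,
     (exists w : seq gen, \tr (eval_word ('i : algC) w) = t) <->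
     (exists j : nat, (j < 4)%N /\
        let c := ('i : algC) ^+ j in
        t = 0 \/ t = c \/ t = sqrtC 2 * z8 * c \/ t = 2 * c)) /\
  (* (2) *)
  (forall w : seq gen,
     (exists k : int, \tr (eval_word (1 : algC) w) = (4 * k)%:~R) ->
     \tr (eval_word ('i : algC) w) = 0).
Proof.
split; first exact: part1.
split; last exact: part2.
move=> t; rewrite part1 TS_eq.
have [v hv hu] := u_cases z8 hz8.
have h0 : gemb (0,0) = 0 by rewrite gemb_c; ring.
have h2 : 2 = gemb (2,0) by rewrite gemb_c; ring.
split.
  move/mapP=> [s hs ->].
  have /hasP [j hj hor] := allP (allP chk1 v hv) s hs.
  exists j; split; first by rewrite mem_iota in hj.
  rewrite /= hu gemb_ipow h2 -!gemb_mul.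
  case/or4P: hor => /eqP ->; [left | right; left | right; right; left | right; right; right];
    by rewrite ?h0.
move=> [j [hj H]].
have hj' : j \in iota 0 4 by rewrite mem_iota.
have /and4P [a1 a2 a3 a4] := allP (allP chk2 v hv) j hj'.
rewrite /= hu gemb_ipow h2 -!gemb_mul -h0 in H.
by case: H => [->|[->|[->|->]]]; apply: map_f.
Qed.
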